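(* Fix $n\ge1$. Define $i_n:\mathrm{Conf}_n(\mathbb C)\to\mathrm{Conf}^{lf}_\infty(\mathbb C)$ by $i_n(z_1,\dots,z_n)=(z_1,\dots,z_n,R,R+1,R+2,\dots)$ where $R=1+\max_j|z_j|$. Then $i_n$ is continuous with $i_n(1,2,\dots,n)=\widetilde{\mathbb N}$, and the induced homomorphism \[ (i_n)_*:\pi_1\bigl(\mathrm{Conf}_n(\mathbb C),(1,\dots,n)\bigr)\to\pi_1\bigl(\mathrm{Conf}^{lf}_\infty(\mathbb C),\widetilde{\mathbb N}\bigr) \] is injective.
   Context: $\mathrm{Conf}_n(\mathbb C)=\{(z_1,\dots,z_n)\in\mathbb C^n: z_i\ne z_j \text{ for } i\neq j\}$ with the usual topology. $\mathrm{Conf}^{lf}_\infty(\mathbb C)$ is the set of sequences $(x_j)_{j\ge1}$ of pairwise distinct complex numbers such that $\{j:|x_j|\le R\}$ is finite for all $R>0$, with metric $d_{\Sigma}(x,y)=\sum_j2^{-j}\min\{|x_j-y_j|,1\}+d_{\mathcal V}(P(x),P(y))$, where $P(x)=\{x_j\}$ and $d_{\mathcal V}$ is the vague metric $d_{\mathcal V}(A,B)=\sum_j 2^{-j}\frac{|\sum_{a\in A}\varphi_j(a)-\sum_{b\in B}\varphi_j(b)|}{1+|\sum_{a\in A}\varphi_j(a)-\sum_{b\in B}\varphi_j(b)|}$ for a fixed sequence $(\varphi_j)$ of compactly supported continuous real functions such that for each $m$ those supported in $\{|z|\le m\}$ are sup-norm dense among such functions supported in $\{|z|\le m\}$. $\widetilde{\mathbb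 N}=(1,2,3,\dots)$. *)

(* Defs.v *)
From Stdlib Require Import Reals.
From Coquelicot Require Import Coquelicot.
From mathcomp Require Import ssreflect ssrbool ssrfun eqtype ssrnat seq fintype bigop.
Open Scope R_scope.

Definition cont_on {A B : Type} (dA : A -> A -> R) (SA : A -> Prop)
  (dB : B -> B -> R) (f : A -> B) : Prop :=
  forall a, SA a -> forall eps, 0 < eps -> exists delta, 0 < delta /\
    forall a', SA a' -> dA a a' < delta -> dB (f a) (f a') < eps.

Definition I01 (t : R) : Prop := 0 <= t <= 1.
Definition dR (s t : R) : R := Rabs (s - t).
Definition I01sq (p : R * R) : Prop := I01 (fst p) /\ I01 (snd p).
Definition dR2 (p q : R * R) : R :=
  Rmax (Rabs (fst p - fst q)) (Rabs (snd p - snd q)).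

Definition loop {X : Type} (dX : X -> X -> R) (S : X -> Prop) (b : X)
  (g : R -> X) : Prop :=
  cont_on dR I01 dX g /\ (forall t, I01 t -> S (g t)) /\ g 0 = b /\ g 1 = b.

(* homotopy of loops relative to the endpoints (equality in pi_1(S,b)) *)
Definition homotopic_rel {X : Type} (dX : X -> X -> R) (S : X -> Prop) (b : X)
  (g1 g2 : R -> X) : Prop :=
  exists H : R * R -> X,
    cont_on dR2 I01sq dX H /\
    (forall p, I01sq p -> S (H p)) /\
    (forall s, I01 s -> H (s, 0) = g1 s /\ H (s, 1) = g2 s) /\
    (forall t, I01 t -> H (0, t) = b /\ H (1, t) = b).

Definition in_Conf (n : nat) (z : 'I_n -> C) : Prop :=
  forall k l : 'I_n, k <> l -> z k <> z l.

Definition dist_n (n : nat) (z w : 'I_n -> C) : R :=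
  \big[Rmax/0]_(k < n) Cmod (Cminus (z k) (w k)).

Definition base_n (n : nat) : 'I_n -> C := fun k => RtoC (INR (nat_of_ord k + 1)).

(* sequences are indexed from 0: x 0 = x_1, x 1 = x_2, ... *)

Definition in_Conf_lf (x : nat -> C) : Prop :=
  (forall j l : nat, j <> l -> x j <> x l) /\
  (forall r : R, 0 < r -> exists N : nat, forall j : nat, (N <= j)%nat -> r < Cmod (x j)).

Definition NN : nat -> C := fun j => RtoC (INR (j + 1)).

Definition cont_C (f : C -> R) : Prop :=
  forall z eps, 0 < eps -> exists delta, 0 < delta /\
    forall w, Cmod (Cminus w z) < delta -> Rabs (f w - f z) < eps.

Definition supported_in (m : R) (f : C -> R) : Prop :=
  forall z, m < Cmod z -> f z = 0.

Definition compactly_supported (f : C -> R) : Prop :=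
  exists m : R, supported_in m f.

(* the fixed sequence (phi_j)_{j>=1} (phi 0 = phi_1, ...) *)
Definition admissible (phi : nat -> C -> R) : Prop :=
  (forall j, cont_C (phi j) /\ compactly_supported (phi j)) /\
  (forall m : nat, (1 <= m)%nat ->
     forall f : C -> R, cont_C f -> supported_in (INR m) f ->
     forall eps, 0 < eps ->
       exists j, supported_in (INR m) (phi j) /\
                 forall z, Rabs (f z - phi j z) < eps).

(* sum_{a in P(x)} f(a); since the x_j are pairwise distinct this is
   sum_j f(x_j) (finitely many nonzero terms for compactly supported f) *)
Definition Psum (f : C -> R) (x : nat -> C) : R := Series (fun j => f (x j)).

Definition dV (phi : nat -> C -> R) (x y : nat -> C) : R :=
  Series (fun j => (/ 2) ^ (S j) *
    (Rabs (Psum (phi j) x - Psum (phi j) y) /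
     (1 + Rabs (Psum (phi j) x - Psum (phi j) y)))).

Definition dSigma (phi : nat -> C -> R) (x y : nat -> C) : R :=
  Series (fun j => (/ 2) ^ (S j) * Rmin (Cmod (Cminus (x j) (y j))) 1)
  + dV phi x y.

Definition iota_n (n : nat) (z : 'I_n -> C) : nat -> C :=
  let R0 := 1 + \big[Rmax/0]_(k < n) Cmod (z k) in
  fun j => match (insub j : option 'I_n) with
           | Some k => z k
           | None => RtoC (R0 + INR (j - n))
           end.

(* Main.v *)
Require Import Defs.
From Stdlib Require Import Reals Lra Lia FunctionalExtensionality.
From Coquelicot Require Import Coquelicot.
From mathcomp Require Import ssreflect ssrbool ssrfun eqtype ssrnat seq fintype bigop.
Open Scope R_scope.

Lemma bigmax_seq_ge (I:eqType) (r: seq I) (F: I -> R) k :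
  k \in r -> F k <= \big[Rmax/0]_(i <- r) F i.
Proof.
elim: r => [|a r IH] //=; rewrite in_cons big_cons; case/orP => [/eqP->|H].
- apply Rmax_l.
- eapply Rle_trans; [apply IH, H | apply Rmax_r].
Qed.

Lemma bigmax_ge n (F : 'I_n -> R) k : F k <= \big[Rmax/0]_(i < n) F i.
Proof. apply: (@bigmax_seq_ge _ _ F k). exact: mem_index_enum. Qed.

Lemma bigmax_le n (F : 'I_n -> R) c : (forall i, F i <= c) -> 0 <= c ->
  \big[Rmax/0]_(i < n) F i <= c.
Proof. move=> H H0; apply big_ind => //; move=> *; by apply Rmax_lub. Qed.

Lemma bigmax_ge0 n (F : 'I_n -> R) : 0 <= \big[Rmax/0]_(i < n) F i.
Proof.
rewrite /index_enum. elim: (Finite.enum _) => [|a r IH]; rewrite ?big_nil ?big_cons; [lra|].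
eapply Rle_trans; [apply IH|apply Rmax_r].
Qed.

Lemma Rmax_lip a b x y : Rabs (Rmax a x - Rmax b y) <= Rmax (Rabs (a - b)) (Rabs (x - y)).
Proof.
unfold Rmax; repeat match goal with |- context [Rle_dec ?a ?b] => destruct (Rle_dec a b) as [?|?%Rnot_le_lt] end;
unfold Rabs in *; repeat match goal with |- context [Rcase_abs ?a] => destruct (Rcase_abs a) | H : context [Rcase_abs ?a] |- _ => destruct (Rcase_abs a) end; lra.
Qed.

Lemma bigmax_lip_seq (I:eqType) (r: seq I) (F G: I -> R) :
  Rabs (\big[Rmax/0]_(i <- r) F i - \big[Rmax/0]_(i <- r) G i) <= \big[Rmax/0]_(i <- r) Rabs (F i - G i).
Proof.
elim: r => [|a r IH]. rewrite !big_nil Rminus_0_r Rabs_R0; lra.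
rewrite !big_cons. eapply Rle_trans; [apply Rmax_lip|].
apply Rle_max_compat_l, IH.
Qed.

Lemma Cmod_sym (a b : C) : Cmod (a - b) = Cmod (b - a).
Proof. replace (b - a)%C with (- (a - b))%C by ring. by rewrite Cmod_opp. Qed.

Lemma Cmod_rev (a b : C) : Rabs (Cmod a - Cmod b) <= Cmod (a - b).
Proof.
have h1 := Cmod_triangle (a - b) b. have h2 := Cmod_triangle (b - a) a.
replace (a - b + b)%C with a in h1 by ring. replace (b - a + a)%C with b in h2 by ring.
rewrite -Cmod_sym in h2. unfold Rabs; destruct Rcase_abs; lra.
Qed.

Definition Rz n (z : 'I_n -> C) := 1 + \big[Rmax/0]_(k < n) Cmod (z k).

Lemma iota_lt n z (k : 'I_n) : iota_n n z k = z k.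
Proof. by rewrite /iota_n /= valK. Qed.

Lemma iota_ge n z j : (n <= j)%nat -> iota_n n z j = RtoC (Rz n z + INR (j - n)).
Proof. move=> H. rewrite /iota_n /= insubN // -leqNgt //. Qed.

Lemma Series_fin a K : (forall k, (K < k)%nat -> a k = 0) -> Series a = sum_f_R0 a K.
Proof.
move=> H. rewrite /Series (Lim_seq_ext_loc _ (fun _ => sum_f_R0 a K)) ?Lim_seq_const //.
exists K => m Hm. rewrite sum_n_Reals.
have E: forall p, sum_f_R0 a (K + p) = sum_f_R0 a K.
  elim=> [|p IH]; first by rewrite addn0.
  rewrite addnS /= IH H ?Rplus_0_r //. by rewrite ltnS leq_addr.
have -> : m = (K + (m - K))%nat by rewrite subnKC //; apply/leP.
by rewrite E.
Qed.

Lemma is_series_half : is_series (fun j => (/2)^(S j)) 1.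
Proof.
have H := is_series_geom (/2). have H1 : Rabs (/2) < 1 by rewrite Rabs_pos_eq; lra.
have Hs := is_series_scal_l (/2) _ _ (H H1).
have E : scal (/ 2) (/ (1 - / 2)) = 1 by rewrite /scal /= /mult /=; field.
rewrite E in Hs. apply: (is_series_ext _ _ _ _ Hs) => j. by rewrite /scal /= /mult.
Qed.

Lemma ex_half : ex_series (fun j => (/2)^(S j)).
Proof. eexists; apply is_series_half. Qed.

Lemma Series_half : Series (fun j => (/2)^(S j)) = 1.
Proof. apply is_series_unique, is_series_half. Qed.

Definition geomb (a : nat -> R) := forall j, 0 <= a j <= (/2)^(S j).

Lemma ex_geomb a : geomb a -> ex_series a.
Proof.
move=> H. apply: (ex_series_le _ (fun j => (/2)^(S j))); last by apply ex_half.
move=> j. rewrite /norm /= /abs /=. rewrite Rabs_pos_eq; apply H.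
Qed.

Lemma Series_nonneg a : (forall j, 0 <= a j) -> ex_series a -> 0 <= Series a.
Proof.
move=> H He. have -> : 0 = Series (fun _ => 0) by rewrite (Series_fin _ 0) //.
apply Series_le; [move=> j; split; [lra| apply H] | by []].
Qed.

Lemma Series_ge_term a k : geomb a -> a k <= Series a.
Proof.
move=> H. rewrite (Series_incr_n a (S k)); last by apply ex_geomb. 2: by apply/ltP.
match goal with |- context [Series ?f] => have h1 : 0 <= Series f end.
  apply Series_nonneg; first by move=> j; apply H.
  exact (proj1 (ex_series_incr_n a (S k)) (ex_geomb a H)).
have h2 : a k <= sum_f_R0 a k.
  clear h1; case: k => [|k] /=; first lra.
  have := cond_pos_sum a k (fun j => proj1 (H j)). have := H k.+1. lra.
simpl in *; lra.
Qed.

Lemma fin_delta (P : nat -> R -> Prop) :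
  (forall k d d', 0 < d' <= d -> P k d -> P k d') ->
  (forall k, exists d, 0 < d /\ P k d) ->
  forall J, exists d, 0 < d /\ forall k, (k < J)%nat -> P k d.
Proof.
move=> Hm H. elim=> [|J [d1 [Hd1 IH]]]; first by exists 1; split; [lra|].
have [d2 [Hd2 H2]] := H J. exists (Rmin d1 d2); split; first by apply Rmin_pos.
move=> k; rewrite ltnS leq_eqVlt; case/orP => [/eqP->|Hk].
- apply: (Hm _ d2) => //. split; [apply Rmin_pos=>//|apply Rmin_r].
- apply: (Hm _ d1); last by apply IH. split; [apply Rmin_pos=>//|apply Rmin_l].
Qed.

Lemma Series_tail_bound a J e : (0 < J)%nat -> 0 <= e -> geomb a ->
  (forall j, (j < J)%nat -> a j <= (/2)^(S j) * e) -> Series a <= e + (/2)^J.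
Proof.
move=> HJ He Ha Hlt.
pose c := fun j => if (j < J)%nat then 0 else (/2)^(S j).
have hp : forall m, 0 <= (/2)^m by move=> m; apply pow_le; lra.
have hc : geomb c by move=> j; rewrite /c; case: ifP => _; split; try lra; apply hp.
have Sc : Series c = (/2)^J.
  rewrite (Series_incr_n c J); [| by apply/ltP | by apply ex_geomb].
  rewrite sum_eq_R0 => [|m Hm]; last first.
    rewrite /c ifT //. apply/ltP. move/ltP: HJ. lia.
  rewrite (Series_ext _ (fun k => (/2)^J * (/2)^(S k))).
    by rewrite Series_scal_l Series_half; ring.
  move=> k. rewrite /c. have -> : ((J + k)%coq_nat < J)%nat = false.
    apply/negbTE; rewrite -leqNgt. apply/leP; lia.
  rewrite -pow_add. f_equal. lia.
have Hb : ex_series (fun j => e * (/2)^(S j) + c j).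
  apply: (ex_series_plus (fun j => e * (/2)^(S j)) c); last by apply ex_geomb.
  apply: (ex_series_scal_l e); exact ex_half.
apply Rle_trans with (Series (fun j => e * (/2)^(S j) + c j)).
  apply Series_le => //. move=> j; split; first by apply Ha.
  rewrite /c; case: ifP => Hj.
  - have := Hlt j Hj. lra.
  - have := Ha j. have : 0 <= e * (/2)^(S j) by apply Rmult_le_pos => //. lra.
rewrite Series_plus; last by apply ex_geomb.
  rewrite (Series_scal_l e (fun j => (/2)^(S j))) Series_half Sc; lra.
apply: (ex_series_scal_l e); exact ex_half.
Qed.

Lemma dist_ge0 n z z' : 0 <= dist_n n z z'.
Proof. apply bigmax_ge0. Qed.

Lemma Rz_ge1 n z : 1 <= Rz n z.
Proof. rewrite /Rz. have := bigmax_ge0 _ (fun k : 'I_n => Cmod (z k)). lra. Qed.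

Lemma Rz_gt n z (k : 'I_n) : Cmod (z k) < Rz n z.
Proof. rewrite /Rz. have := bigmax_ge _ (fun k : 'I_n => Cmod (z k)) k. lra. Qed.

Lemma Rz_lip n z z' : Rabs (Rz n z - Rz n z') <= dist_n n z z'.
Proof.
rewrite /Rz. replace (1 + _ - _) with
  (\big[Rmax/0]_(k < n) Cmod (z k) - \big[Rmax/0]_(k < n) Cmod (z' k)) by ring.
eapply Rle_trans; first by apply: (@bigmax_lip_seq _ (index_enum 'I_n)).
apply bigmax_le; last by apply dist_ge0.
move=> i. eapply Rle_trans; first by apply Cmod_rev.
apply: (bigmax_ge _ (fun k => Cmod (z k - z' k)%C)).
Qed.

Lemma Cmod_iota_ge n z j : (n <= j)%nat -> Cmod (iota_n n z j) = Rz n z + INR (j - n).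
Proof.
move=> H. rewrite iota_ge // Cmod_R Rabs_pos_eq //.
have := Rz_ge1 n z. have := pos_INR (j - n). lra.
Qed.

Lemma iota_coord n z z' j : Cmod (iota_n n z j - iota_n n z' j)%C <= dist_n n z z'.
Proof.
case: (ltnP j n) => Hj.
- have -> : j = nat_of_ord (Ordinal Hj) by [].
  rewrite !iota_lt. apply: (bigmax_ge _ (fun k => Cmod (z k - z' k)%C)).
- rewrite !iota_ge // -RtoC_minus Cmod_R.
  replace (Rz n z + INR (j - n) - (Rz n z' + INR (j - n))) with (Rz n z - Rz n z') by ring.
  apply Rz_lip.
Qed.

Lemma part1 n z : in_Conf n z -> in_Conf_lf (iota_n n z).
Proof.
move=> Hz. split.
- have mix : forall j l, (j < n)%nat -> (n <= l)%nat -> iota_n n z j <> iota_n n z l.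
    move=> j l Hj Hl E. have := Rz_gt n z (Ordinal Hj).
    have : Cmod (iota_n n z j) = Cmod (iota_n n z l) by rewrite E.
    have -> : iota_n n z j = z (Ordinal Hj) by rewrite -iota_lt.
    rewrite (Cmod_iota_ge n z l Hl) => ->.
    have := pos_INR (l - n). lra.
  move=> j l Hjl. case: (ltnP j n) => Hj; case: (ltnP l n) => Hl.
  + rewrite (_ : j = nat_of_ord (Ordinal Hj)) // (_ : l = nat_of_ord (Ordinal Hl)) // !iota_lt.
    apply Hz => E. apply Hjl. by move/(congr1 val): E.
  + by apply mix.
  + move=> E. symmetry in E. by apply: (mix l j).
  + rewrite !iota_ge // => E. apply Hjl.
    have E2 := RtoC_inj _ _ E. have E3 : INR (j - n) = INR (l - n) by lra.
    have E4 := INR_eq _ _ E3. by rewrite -(subnK Hj) -(subnK Hl) E4.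
- move=> r Hr. have [N HN] := INR_archimed 1 r Rlt_0_1.
  exists (n + N)%nat => j Hj. have Hj' : (n <= j)%nat.
    exact: leq_trans (leq_addr N n) Hj.
  rewrite Cmod_iota_ge //. have := Rz_ge1 n z.
  have : INR N <= INR (j - n).
    apply le_INR. apply/leP. by rewrite leq_subRL.
  lra.
Qed.

Lemma part3 n : (1 <= n)%nat -> iota_n n (base_n n) = NN.
Proof.
move=> Hn.
have HR : Rz n (base_n n) = 1 + INR n.
  rewrite /Rz. f_equal. apply Rle_antisym.
  - apply bigmax_le; last by apply pos_INR.
    move=> i. rewrite /base_n Cmod_R Rabs_pos_eq; last by apply pos_INR.
    apply le_INR. apply/leP. rewrite addn1. exact: ltn_ord.
  - have Hlt : (n.-1 < n)%nat by rewrite prednK.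
    eapply Rle_trans; last by apply: (bigmax_ge _ (fun k => Cmod (base_n n k)) (Ordinal Hlt)).
    rewrite /base_n Cmod_R Rabs_pos_eq; last by apply pos_INR.
    apply Req_le. f_equal. by rewrite /= addn1 prednK.
apply functional_extensionality => j.
case: (ltnP j n) => Hj.
- have -> : j = nat_of_ord (Ordinal Hj) by [].
  by rewrite iota_lt.
- rewrite iota_ge // HR /NN. f_equal.
  rewrite addn1 S_INR -{2}(subnKC Hj) plus_INR. ring.
Qed.

Lemma half_pos m : 0 < (/2)^m.
Proof. apply pow_lt; lra. Qed.

Lemma half_le1 p : (/2)^p <= 1.
Proof. elim: p => [|p IH] /=; [lra|]. have := half_pos p. nra. Qed.

Lemma half_mono m k : (k <= m)%nat -> (/2)^m <= (/2)^k.
Proof.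
move=> H. have -> : m = (k + (m - k))%coq_nat by rewrite plusE subnKC. rewrite pow_add. have := half_le1 (m - k). have := half_pos k. nra.
Qed.

Lemma frac_bound A : 0 <= A -> 0 <= A / (1 + A) <= 1 /\ A / (1 + A) <= A.
Proof.
move=> H. have H1 : 0 < 1 + A by lra.
split; [split|].
- apply Rdiv_le_0_compat; lra.
- apply (Rmult_le_reg_r (1 + A)) => //. field_simplify; lra.
- apply (Rmult_le_reg_r (1 + A)) => //. field_simplify; nra.
Qed.

Lemma geomb_S1 (x y : nat -> C) : geomb (fun j => (/2)^(S j) * Rmin (Cmod (x j - y j)%C) 1).
Proof.
move=> j; cbv beta. have := half_pos (S j). have := Cmod_ge_0 (x j - y j)%C.
have := Rmin_r (Cmod (x j - y j)%C) 1.
have : 0 <= Rmin (Cmod (x j - y j)%C) 1 by apply Rmin_glb; [apply Cmod_ge_0|lra].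
move=> *. split; nra.
Qed.

Lemma geomb_dV (u : nat -> R) : geomb (fun j => (/2)^(S j) * (Rabs (u j) / (1 + Rabs (u j)))).
Proof.
move=> j; cbv beta. have := half_pos (S j). have [[? ?] _] := frac_bound _ (Rabs_pos (u j)). split; nra.
Qed.

Lemma dV_ge0 phi x y : 0 <= dV phi x y.
Proof.
rewrite /dV. apply Series_nonneg; last by apply ex_geomb, (geomb_dV (fun j => Psum (phi j) x - Psum (phi j) y)).
move=> j. apply (geomb_dV (fun j => Psum (phi j) x - Psum (phi j) y)).
Qed.

Lemma dSigma_coord phi x y k : (/2)^(S k) * Rmin (Cmod (x k - y k)%C) 1 <= dSigma phi x y.
Proof.
rewrite /dSigma. have := dV_ge0 phi x y.
have := Series_ge_term _ k (geomb_S1 x y). lra.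
Qed.

Lemma part4 n phi (g1 g2 : R -> 'I_n -> C) :
  loop (dist_n n) (in_Conf n) (base_n n) g1 ->
  loop (dist_n n) (in_Conf n) (base_n n) g2 ->
  homotopic_rel (dSigma phi) in_Conf_lf NN
    (fun t => iota_n n (g1 t)) (fun t => iota_n n (g2 t)) ->
  homotopic_rel (dist_n n) (in_Conf n) (base_n n) g1 g2.
Proof.
move=> _ _ [H [Hc [HS [Hb1 Hb2]]]].
exists (fun p (k : 'I_n) => H p (nat_of_ord k)). split; [|split; [|split]].
- move=> p Hp eps Heps. pose m := Rmin (eps / 2) 1.
  have Hm : 0 < m by apply Rmin_pos; lra.
  have [d [Hd Hd']] := Hc p Hp ((/2)^n * m) (Rmult_lt_0_compat _ _ (half_pos n) Hm).
  exists d; split => // p' Hp' Hpp'. have Hs := Hd' p' Hp' Hpp'.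
  apply Rle_lt_trans with (eps / 2); last lra.
  apply bigmax_le; last lra. move=> k.
  have Hk := dSigma_coord phi (H p) (H p') k.
  have Hmon : (/2)^n <= (/2)^(S k) by apply half_mono; exact: ltn_ord.
  have Hpos := half_pos n.
  have Hr : Rmin (Cmod (H p k - H p' k)%C) 1 < m.
    have : (/2)^n * Rmin (Cmod (H p k - H p' k)%C) 1 < (/2)^n * m.
      have : 0 <= Rmin (Cmod (H p k - H p' k)%C) 1.
        apply Rmin_glb; [apply Cmod_ge_0|lra].
      nra.
    move=> h. by apply (Rmult_lt_reg_l ((/2)^n)).
  have Hm1 : m <= 1 by apply Rmin_r.
  have Hm2 : m <= eps / 2 by apply Rmin_l.
  move: Hr. rewrite /Rmin. case: Rle_dec => ? ?; lra.
- move=> p Hp k l Hkl. apply (proj1 (HS p Hp)) => E. apply Hkl. by apply val_inj.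
- move=> s Hs. have [E1 E2] := Hb1 s Hs. split; apply functional_extensionality => k.
  + by rewrite E1 iota_lt.
  + by rewrite E2 iota_lt.
- move=> t Ht. have [E1 E2] := Hb2 t Ht. split; apply functional_extensionality => k.
  + by rewrite E1.
  + by rewrite E2.
Qed.

Lemma sum_diff K (a b : nat -> R) e' : (forall k, (k <= K)%nat -> Rabs (a k - b k) < e') ->
  Rabs (sum_f_R0 a K - sum_f_R0 b K) < INR (S K) * e'.
Proof.
elim: K => [|K IH] H.
- have := H 0%nat (leqnn _). simpl; lra.
- have h1 := IH (fun k Hk => H k (leqW Hk)). have h2 := H K.+1 (leqnn _).
  change (sum_f_R0 a K.+1) with (sum_f_R0 a K + a K.+1).
  change (sum_f_R0 b K.+1) with (sum_f_R0 b K + b K.+1).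
  replace (sum_f_R0 a K + a K.+1 - (sum_f_R0 b K + b K.+1)) with
    ((sum_f_R0 a K - sum_f_R0 b K) + (a K.+1 - b K.+1)) by ring.
  eapply Rle_lt_trans; first by apply Rabs_triang.
  rewrite (S_INR K.+1) Rmult_plus_distr_r Rmult_1_l. lra.
Qed.

Lemma Psum_cont n f z e : cont_C f -> compactly_supported f -> 0 < e ->
  exists d, 0 < d /\ forall z', dist_n n z z' < d ->
    Rabs (Psum f (iota_n n z) - Psum f (iota_n n z')) < e.
Proof.
move=> Hf [M HM] He. have [N HN] := INR_archimed 1 M Rlt_0_1.
pose K := (n + N)%nat.
have Hv : forall w k, (K < k)%nat -> f (iota_n n w k) = 0.
  move=> w k Hk. apply HM. have Hnk : (n <= k)%nat.
    apply: leq_trans (leq_addr N n) (ltnW Hk).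
  rewrite Cmod_iota_ge //. have := Rz_ge1 n w.
  have : INR N <= INR (k - n).
    apply le_INR. apply/leP. rewrite leq_subRL //. exact: ltnW.
  lra.
have HK : 0 < INR (S K) by apply lt_0_INR; apply/ltP.
pose e' := e / INR (S K).
have He' : 0 < e' by apply Rdiv_lt_0_compat.
have [d [Hd Hd']] := fin_delta
  (fun k d => forall w, Cmod (w - iota_n n z k)%C < d -> Rabs (f w - f (iota_n n z k)) < e')
  (fun k d d' Hdd P w Hw => P w (Rlt_le_trans _ _ _ Hw (proj2 Hdd)))
  (fun k => Hf (iota_n n z k) e' He') (S K).
exists d; split => // z' Hz'.
rewrite /Psum !(Series_fin _ K); try by move=> k Hk; apply Hv.
have -> : e = INR (S K) * e' by rewrite /e'; field; lra.
apply sum_diff => k Hk. rewrite Rabs_minus_sym. apply Hd'; first by rewrite ltnS.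
rewrite Cmod_sym. eapply Rle_lt_trans; last exact Hz'. apply iota_coord.
Qed.

Lemma part2 n phi : admissible phi -> cont_on (dist_n n) (in_Conf n) (dSigma phi) (iota_n n).
Proof.
move=> [Hphi _] z _ eps Heps.
have He : 0 < eps / 3 by lra.
have [N HN] := pow_lt_1_zero (/2) ltac:(rewrite Rabs_pos_eq; lra) (eps / 3) He.
pose J := S N.
have HJ : (/2)^J < eps / 3.
  have := HN J (Nat.le_succ_diag_r N). rewrite Rabs_pos_eq //. apply Rlt_le, half_pos.
have [d1 [Hd1 Hd1']] := fin_delta
  (fun j d => forall z', dist_n n z z' < d ->
     Rabs (Psum (phi j) (iota_n n z) - Psum (phi j) (iota_n n z')) < eps / 3)
  (fun j d d' Hdd P z' Hz' => P z' (Rlt_le_trans _ _ _ Hz' (proj2 Hdd)))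
  (fun j => Psum_cont n (phi j) z (eps / 3) (proj1 (Hphi j)) (proj2 (Hphi j)) He) J.
exists (Rmin d1 (eps / 3)); split; first by apply Rmin_pos.
move=> z' _ Hz'. have Hz1 : dist_n n z z' < d1 by have := Rmin_l d1 (eps / 3); lra.
have Hz2 : dist_n n z z' < eps / 3 by have := Rmin_r d1 (eps / 3); lra.
rewrite /dSigma.
have S1 : Series (fun j => (/2)^(S j) * Rmin (Cmod (iota_n n z j - iota_n n z' j)%C) 1)
    <= dist_n n z z'.
  apply Rle_trans with (Series (fun j => dist_n n z z' * (/2)^(S j))).
    apply Series_le.
      move=> j. split; first by apply (geomb_S1 (iota_n n z) (iota_n n z')).
      rewrite Rmult_comm. apply Rmult_le_compat_r; first by apply Rlt_le, half_pos.
      eapply Rle_trans; [apply Rmin_l| apply iota_coord].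
    apply: (ex_series_scal_l (dist_n n z z')); exact ex_half.
  rewrite (Series_scal_l (dist_n n z z') (fun j => (/2)^(S j))) Series_half. lra.
have S2 : dV phi (iota_n n z) (iota_n n z') <= eps / 3 + (/2)^J.
  apply Series_tail_bound => //; first lra.
    exact: (geomb_dV (fun j => Psum (phi j) (iota_n n z) - Psum (phi j) (iota_n n z'))).
  move=> j Hj. apply Rmult_le_compat_l; first by apply Rlt_le, half_pos.
  have h := Hd1' j Hj z' Hz1.
  have [_ h2] := frac_bound _ (Rabs_pos (Psum (phi j) (iota_n n z) - Psum (phi j) (iota_n n z'))).
  lra.
lra.
Qed.

Theorem mainTheorem4 (n : nat) (Hn : (1 <= n)%nat) (phi : nat -> C -> R)
  (Hphi : admissible phi) :
  (forall z, in_Conf n z -> in_Conf_lf (iota_n n z)) /\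
  cont_on (dist_n n) (in_Conf n) (dSigma phi) (iota_n n) /\
  iota_n n (base_n n) = NN /\
  (forall g1 g2 : R -> 'I_n -> C,
     loop (dist_n n) (in_Conf n) (base_n n) g1 ->
     loop (dist_n n) (in_Conf n) (base_n n) g2 ->
     homotopic_rel (dSigma phi) in_Conf_lf NN
       (fun t => iota_n n (g1 t)) (fun t => iota_n n (g2 t)) ->
     homotopic_rel (dist_n n) (in_Conf n) (base_n n) g1 g2).
Proof.
split; first exact: part1.
split; first exact: part2.
split; first exact: part3.
move=> g1 g2; exact: part4.
Qed.
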